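(* Fix an integer $N\ge 1$. For real $\mu$, let $\ell^2_\mu\subset\mathbb{C}^\infty$ be the space of sequences with norm $\|\mathbf u\|_{\ell^2_\mu}=\bigl(\sum_{k\ge0}|u_k|^2(k+1)^{2\mu}\bigr)^{1/2}$, and equip $\mathbb{C}^n$ (viewed as the first $n$ entries of a sequence) with the induced norm, also denoted $\ell^2_\mu$. Let $\mathcal L$, $\mathcal B$, $D$ and $\mathcal R$ be as in the context (in particular $\mathcal B:\ell^2_D\to\mathbb{C}^N$ is bounded). Suppose that $\begin{pmatrix}\mathcal B\\ \mathcal L\end{pmatrix}:\ell^2_{\lambda+1}\to\ell^2_\lambda$ is an invertible operator for some $\lambda\in\{D-1,D,D+1,\dots\}$. Let $\mathcal P_n=(I_n,\mathbf 0)$ be the $n\times\infty$ projection onto the first $n$ entries, $R_n=\mathcal P_n\mathcal R\mathcal P_n^\top$ and $A_n=\mathcal P_n\begin{pmatrix}\mathcal B\\ \mathcal L\end{pmatrix}\mathcal P_n^\top$. Then, as $n\to\infty$, $$\|A_nR_n\|_{\ell^2_\lambda}=O(1)\quad\text{and}\quad\|(A_nR_n)^{-1}\|_{\ell^2_\lambda}=O(1).$$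
   Context: Chebyshev polynomials are $T_k(x)=\cos(k\arccos x)$. For integers $\lambda\ge1$, $C^{(\lambda)}_k$ are the ultraspherical polynomials, orthogonal on $[-1,1]$ with weight $(1-x^2)^{\lambda-1/2}$ and normalized so that $C^{(\lambda)}_k(x)=\frac{2^k(\lambda)_k}{k!}x^k+O(x^{k-1})$, $(\lambda)_k=\frac{(\lambda+k-1)!}{(\lambda-1)!}$. Operators act on coefficient sequences indexed from $0$. $(\mathcal D_\lambda\mathbf u)_j=2^{\lambda-1}(\lambda-1)!\,(j+\lambda)u_{j+\lambda}$ (maps Chebyshev coefficients of $u$ to $C^{(\lambda)}$ coefficients of $u^{(\lambda)}$). $(\mathcal S_0\mathbf u)_0=u_0-\tfrac12u_2$, $(\mathcal S_0\mathbf u)_j=\tfrac12(u_j-u_{j+2})$ for $j\ge1$ (Chebyshev to $C^{(1)}$ coefficients); for $\lambda\ge1$, $(\mathcal S_\lambda\mathbf v)_j=\frac{\lambda}{\lambda+j}v_j-\frac{\lambda}{\lambda+j+2}v_{j+2}$ ($C^{(\lambda)}$ to $C^{(\lambda+1)}$ coefficients). $\mathcal M_0[a]$ maps Chebyshev coefficients of $v$ to Chebyshev coefficients of $av$, and for $\lambda\ge1$, $\mathcal M_\lambda[a]$ maps $C^{(\lambda)}$ coefficients of $v$ to $C^{(\lambda)}$ coefficients of $av$. The differential operator (with leading coefficient $1$) is represented on Chebyshev coefficients by $\mathcal L=\mathcal D_N+\sum_{\lambda=1}^{N-1}\mathcal S_{N-1}\cdots\mathcal S_\lambda\mathcal M_\lambda[a^\lambda]\mathcal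 D_\lambda+\mathcal S_{N-1}\cdots\mathcal S_0\mathcal M_0[a^0]$, where the coefficient functions $a^0,\dots,a^{N-1}$ are sufficiently smooth that each $\mathcal M_\lambda[a^\lambda]$ is bounded on every $\ell^2_\mu$. $\mathcal B$ is a linear operator from sequences to $\mathbb{C}^N$ representing exactly $N$ boundary conditions on the Chebyshev coefficients, and $D$ is an integer such that $\mathcal B:\ell^2_D\to\mathbb{C}^N$ is bounded. $\mathcal R=\frac{1}{2^{N-1}(N-1)!}\mathrm{diag}(1,\dots,1,\tfrac1N,\tfrac1{N+1},\dots)$ with $N$ leading ones. $\begin{pmatrix}\mathcal B\\ \mathcal L\end{pmatrix}$ outputs the $N$ entries of $\mathcal B\mathbf u$ followed by $\mathcal L\mathbf u$. *)

(* Defs.v *)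
From HB Require Import structures.
From mathcomp Require Import all_boot all_order all_algebra.
From mathcomp Require Import all_classical all_reals all_analysis.
From mathcomp Require Import complex.
Set Implicit Arguments. Unset Strict Implicit. Unset Printing Implicit Defensive.
Import Order.TTheory GRing.Theory Num.Theory.
Import numFieldNormedType.Exports.
Local Open Scope classical_set_scope.
Local Open Scope ring_scope.
Local Open Scope complex_scope.

Section Defs.
Variable R : realType.

Definition cre (z : R[i]) : R := let: Complex a _ := z in a.
Definition cim (z : R[i]) : R := let: Complex _ b := z in b.

Definition cabs2 (z : R[i]) : R := cre z ^+ 2 + cim z ^+ 2.

Definition wgt (mu : R) (k : nat) : R := powR (k.+1)%:R (2 * mu).

Definition in_l2 (mu : R) (u : nat -> R[i]) : Prop :=
  cvgn (series (fun k => cabs2 (u k) * wgt mu k)).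

Definition l2norm (mu : R) (u : nat -> R[i]) : R :=
  Num.sqrt (limn (series (fun k => cabs2 (u k) * wgt mu k))).

Definition vnorm (mu : R) (n : nat) (x : 'cV[R[i]]_n) : R :=
  Num.sqrt (\sum_(k < n) cabs2 (x k 0) * wgt mu k).

Definition cnorm (n : nat) (x : 'cV[R[i]]_n) : R :=
  Num.sqrt (\sum_(k < n) cabs2 (x k 0)).

Definition csum_cvg (f : nat -> R[i]) : Prop :=
  cvgn (series (fun k => cre (f k))) /\ cvgn (series (fun k => cim (f k))).
Definition csum (f : nat -> R[i]) : R[i] :=
  Complex (limn (series (fun k => cre (f k)))) (limn (series (fun k => cim (f k)))).

Definition cint (f : R -> R[i]) : R[i] :=
  Complex (Rintegral (@lebesgue_measure R) `[-1, 1] (fun x => cre (f x)))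
          (Rintegral (@lebesgue_measure R) `[-1, 1] (fun x => cim (f x))).

(* ultraspherical polynomials C^(l)_k(x), through the three-term recurrence
   (k+1) C_{k+1} = 2 (k+l) x C_k - (k+2l-1) C_{k-1}, C_0 = 1, C_1 = 2 l x.
   gegen2 l k x = (C^(l)_k(x), C^(l)_{k+1}(x)). *)
Fixpoint gegen2 (l : nat) (k : nat) (x : R) : R * R :=
  match k with
  | 0 => (1, 2 * l%:R * x)
  | k'.+1 => let: (a, b) := gegen2 l k' x in
             (b, (2 * (k'.+1 + l)%:R * x * b - (k' + 2 * l)%:R * a) / (k'.+2)%:R)
  end.
Definition gegen (l k : nat) (x : R) : R := (gegen2 l k x).1.

(* basis 0 = Chebyshev T_k(x) = cos(k arccos x); basis l = C^(l), l >= 1 *)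
Definition basis (l k : nat) (x : R) : R :=
  if l == 0 then cos (k%:R * acos x) else gegen l k x.

Definition oweight (l : nat) (x : R) : R := powR (1 - x ^+ 2) (l%:R - 2^-1).

(* entry (j,k) of M_l[a]: the j-th C^(l) coefficient of a * C^(l)_k *)
Definition Mentry (l : nat) (a : R -> R[i]) (j k : nat) : R[i] :=
  cint (fun x => a x * (basis l k x * basis l j x * oweight l x)%:C)
  / cint (fun x => (basis l j x ^+ 2 * oweight l x)%:C).

Definition Mop (l : nat) (a : R -> R[i]) (v : nat -> R[i]) : nat -> R[i] :=
  fun j => csum (fun k => Mentry l a j k * v k).

Definition Dop (l : nat) (u : nat -> R[i]) : nat -> R[i] :=
  fun j => ((2 ^+ l.-1 * (l.-1)`!%:R * (j + l)%:R : R)%:C) * u (j + l)%N.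

Definition S0 (u : nat -> R[i]) : nat -> R[i] :=
  fun j => if j == 0%N then u 0%N - (2^-1 : R)%:C * u 2%N
           else (2^-1 : R)%:C * (u j - u j.+2).
Definition Sl (l : nat) (v : nat -> R[i]) : nat -> R[i] :=
  fun j => ((l%:R / (l + j)%:R : R)%:C) * v j
           - ((l%:R / (l + j + 2)%:R : R)%:C) * v j.+2.
Definition Sop (l : nat) := if l == 0%N then S0 else Sl l.

(* schain m l = S_{l+m-1} o ... o S_{l+1} o S_l *)
Fixpoint schain (m l : nat) (v : nat -> R[i]) : nat -> R[i] :=
  match m with
  | 0 => v
  | m'.+1 => schain m' l.+1 (Sop l v)
  end.

(* the operator L (leading coefficient 1), coefficients a l, l < N *)
Definition Lop (N : nat) (a : nat -> R -> R[i]) (u : nat -> R[i]) : nat -> R[i] :=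
  fun j => Dop N u j
    + \sum_(1 <= l < N) schain (N - l) l (Mop l (a l) (Dop l u)) j
    + schain N 0 (Mop 0 (a 0%N) u) j.

Definition BLop (N : nat) (B : (nat -> R[i]) -> 'cV[R[i]]_N)
    (a : nat -> R -> R[i]) (u : nat -> R[i]) : nat -> R[i] :=
  fun j => if insub j is Some i then B u i 0 else Lop N a u (j - N)%N.

Definition eseq (j : nat) : nat -> R[i] := fun k => (k == j)%:R.

Definition Amat (N : nat) (B : (nat -> R[i]) -> 'cV[R[i]]_N)
    (a : nat -> R -> R[i]) (n : nat) : 'M[R[i]]_n :=
  \matrix_(i < n, j < n) BLop B a (eseq j) i.

Definition rdiag (N k : nat) : R :=
  (2 ^+ N.-1 * (N.-1)`!%:R)^-1 * (if (k < N)%N then 1 else (k%:R)^-1).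
Definition Rmat (N n : nat) : 'M[R[i]]_n :=
  \matrix_(i < n, j < n) (if i == j then (rdiag N i)%:C else 0).

End Defs.

(* Main.v *)
Require Import Defs.
From HB Require Import structures.
From mathcomp Require Import all_boot all_order all_algebra.
From mathcomp Require Import all_classical all_reals all_analysis.
From mathcomp Require Import complex.
From mathcomp Require Import ring lra zify.
Import Order.TTheory GRing.Theory Num.Theory.
Import numFieldNormedType.Exports.
Set Implicit Arguments. Unset Strict Implicit.
Local Open Scope ring_scope.

Section L.
Variable R : realType.
Local Open Scope complex_scope.
Implicit Types (u v : nat -> R[i]) (mu : R).

Lemma cabs2_ge0 (x : R[i]) : 0 <= cabs2 x.
Proof. by case: x => a b; rewrite /cabs2 /= addr_ge0 // sqr_ge0. Qed.

Lemma cabs2D (x y : R[i]) : cabs2 (x + y) <= 2 * cabs2 x + 2 * cabs2 y.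
Proof. case: x => a b; case: y => c d. rewrite /cabs2 /=.
 rewrite -subr_ge0. have ->: 2 * (a ^+ 2 + b ^+ 2) + 2 * (c ^+ 2 + d ^+ 2) - ((a + c) ^+ 2 + (b + d) ^+ 2) = (a-c)^+2 + (b-d)^+2 by ring.
 by rewrite addr_ge0 // sqr_ge0. Qed.

Lemma cabs2N (x : R[i]) : cabs2 (- x) = cabs2 x.
Proof. case: x => a b; rewrite /cabs2 /=; ring. Qed.

Lemma cabs2B (x y : R[i]) : cabs2 (x - y) <= 2 * cabs2 x + 2 * cabs2 y.
Proof. by rewrite -(cabs2N y) cabs2D. Qed.

Lemma cabs2M (x y : R[i]) : cabs2 (x * y) = cabs2 x * cabs2 y.
Proof. case: x => a b; case: y => c d. rewrite /cabs2 /=. ring. Qed.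

Lemma cabs2C (r : R) : cabs2 (r%:C) = r ^+ 2.
Proof. rewrite /cabs2 /=; ring. Qed.

Lemma cabs2_eq0 (x : R[i]) : cabs2 x = 0 -> x = 0.
Proof. case: x => a b; rewrite /cabs2 /= => /eqP.
rewrite paddr_eq0 ?sqr_ge0 // !sqrf_eq0 => /andP[/eqP-> /eqP->] //. Qed.

Lemma wgt_gt0 mu k : 0 < wgt mu k.
Proof. by rewrite /wgt powR_gt0 // ltr0n. Qed.

Lemma wgtS mu k : wgt (mu + 1) k = (k.+1%:R) ^+ 2 * wgt mu k.
Proof.
rewrite /wgt mulrDr mulr1 addrC powRD; last by apply/implyP => _; rewrite pnatr_eq0.
by rewrite powR_mulrn // ler0n.
Qed.

Lemma wgt_le mu k : wgt mu k <= wgt (mu + 1) k.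
Proof.
rewrite wgtS ler_peMl ?(ltW (wgt_gt0 _ _)) //.
by rewrite expr_ge1 // ler1n.
Qed.

Lemma powR_ge1 (x r : R) : 1 <= x -> 0 <= r -> 1 <= powR x r.
Proof.
move=> x1 r0. have := @ge0_ler_powR R r r0 1 x; rewrite powR1 => -> //.
 by rewrite nnegrE ler01.
 by rewrite nnegrE (le_trans ler01 x1).
Qed.

Lemma powR_ratio (a b c e : R) : 0 < a -> 0 < b -> a <= c * b -> b <= c * a ->
  powR a e <= powR c `|e| * powR b e.
Proof.
move=> a0 b0 hab hba.
have c0 : 0 < c.
  have := lt_le_trans a0 hab; rewrite pmulr_lgt0 //.
have -> : a = (a / b) * b by rewrite divfK // gt_eqF.
rewrite powRM ?(ltW b0) ?divr_ge0 ?(ltW a0) ?(ltW b0) //.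
rewrite ler_wpM2r ?powR_ge0 //.
have ab0 : 0 < a / b by rewrite divr_gt0.
case: (leP 0 e) => e0.
  have h : a / b <= c by rewrite ler_pdivrMr // mulrC.
  rewrite ger0_norm //; apply: ge0_ler_powR => //; by rewrite ?nnegrE ?(ltW ab0) ?(ltW c0).
rewrite ltr0_norm // -{1}(opprK e) powRN.
rewrite -(mul1r (_^-1)) ler_pdivrMr ?powR_gt0 // -powRM ?(ltW ab0) ?(ltW c0) //.
apply: powR_ge1; last by rewrite oppr_ge0 ltW.
by rewrite mulrA ler_pdivlMr // mul1r.
Qed.

Lemma wgt_shift mu j s : wgt mu j <= powR (s.+1%:R) (2 * `|mu|) * wgt mu (j + s).
Proof.
have -> : 2 * `|mu| = `|2 * mu| by rewrite normrM ger0_norm.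
rewrite /wgt.
apply: powR_ratio; rewrite ?ltr0n //.
  by rewrite -natrM ler_nat; nia.
by rewrite -natrM ler_nat; nia.
Qed.


Definition tm mu u k := cabs2 (u k) * wgt mu k.
Definition ps mu u : nat -> R := series (tm mu u).
Definition Bd mu u Q := forall n, ps mu u n <= Q.
Definition supp (M : nat) u := forall k, (M <= k)%N -> u k = 0.

Lemma tm_ge0 mu u k : 0 <= tm mu u k.
Proof. by rewrite /tm mulr_ge0 ?cabs2_ge0 ?(ltW (wgt_gt0 _ _)). Qed.

Lemma psE mu u n : ps mu u n = \sum_(0 <= k < n) tm mu u k.
Proof. by []. Qed.

Lemma ps_nd mu u : {homo ps mu u : n m / (n <= m)%N >-> n <= m}.
Proof. by apply: nondecreasing_series => k _ _; exact: tm_ge0. Qed.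

Lemma ps_ge0 mu u n : 0 <= ps mu u n.
Proof. by rewrite psE sumr_ge0 // => k _; exact: tm_ge0. Qed.

Lemma Bd_ge0 mu u Q : Bd mu u Q -> 0 <= Q.
Proof. by move=> /(_ 0%N); apply: le_trans; exact: ps_ge0. Qed.

Lemma Bd_le mu u Q Q' : Q <= Q' -> Bd mu u Q -> Bd mu u Q'.
Proof. by move=> h hb n; apply: le_trans (hb n) h. Qed.

Lemma Bd_cvg mu u Q : Bd mu u Q -> in_l2 mu u.
Proof.
move=> hb; apply: (@nondecreasing_is_cvgn _ (ps mu u)); first exact: ps_nd.
by exists Q => _ [n _ <-]; exact: hb.
Qed.

Lemma lim_ge0 mu u : in_l2 mu u -> 0 <= limn (ps mu u).
Proof.
move=> h; apply: le_trans (ps_ge0 mu u 0) _.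
exact: (nondecreasing_cvgn_le (ps_nd mu u) h).
Qed.

Lemma l2normE mu u : in_l2 mu u -> l2norm mu u ^+ 2 = limn (ps mu u).
Proof. by move=> h; rewrite /l2norm sqr_sqrtr //; exact: lim_ge0. Qed.

Lemma l2norm_ge0 mu u : 0 <= l2norm mu u.
Proof. exact: sqrtr_ge0. Qed.

Lemma l2_Bd mu u : in_l2 mu u -> Bd mu u (l2norm mu u ^+ 2).
Proof.
move=> h n; rewrite l2normE //.
exact: (nondecreasing_cvgn_le (ps_nd mu u) h).
Qed.

Lemma Bd_lim mu u Q : Bd mu u Q -> limn (ps mu u) <= Q.
Proof.
move=> hb; apply: limr_le; first exact: (Bd_cvg hb).
by apply: nearW => n; exact: hb.
Qed.

Lemma Bd_l2norm mu u Q : Bd mu u Q -> l2norm mu u ^+ 2 <= Q.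
Proof. by move=> hb; rewrite l2normE; [exact: Bd_lim hb | exact: Bd_cvg hb]. Qed.

Lemma sum_shift (g : nat -> R) s n : (forall k, 0 <= g k) ->
  \sum_(0 <= j < n) g (j + s)%N <= \sum_(0 <= k < n + s) g k.
Proof.
move=> g0; rewrite (@big_cat_nat _ _ _ s 0 (n + s)) //= ?leq_addl //.
rewrite -{3}[s]add0n big_addn addnK lerDr sumr_ge0 //.
Qed.

Lemma Bd_cmp mu u mu' v K1 K2 s1 s2 Q : 0 <= K1 -> 0 <= K2 ->
  (forall j, tm mu' v j <= K1 * tm mu u (j + s1)%N + K2 * tm mu u (j + s2)%N) ->
  Bd mu u Q -> Bd mu' v ((K1 + K2) * Q).
Proof.
move=> k1 k2 h hb n; rewrite psE.
apply: le_trans (ler_sum_nat (fun j _ => h j)) _.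
rewrite big_split /= -!mulr_sumr mulrDl lerD //.
  rewrite ler_wpM2l //; apply: le_trans (sum_shift _ _ (tm_ge0 _ _)) _; exact: hb.
rewrite ler_wpM2l //; apply: le_trans (sum_shift _ _ (tm_ge0 _ _)) _; exact: hb.
Qed.

Lemma Bd_cmp1 mu u mu' v K s Q : 0 <= K ->
  (forall j, tm mu' v j <= K * tm mu u (j + s)%N) ->
  Bd mu u Q -> Bd mu' v (K * Q).
Proof.
move=> k h hb; rewrite -[K]addr0; apply: (Bd_cmp (s1 := s) (s2 := s)) => // j.
by rewrite mul0r addr0.
Qed.

Lemma Bd_add mu v w Q1 Q2 : Bd mu v Q1 -> Bd mu w Q2 ->
  Bd mu (fun j => v j + w j) (2 * Q1 + 2 * Q2).
Proof.
move=> h1 h2 n; rewrite psE.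
have h : \sum_(0 <= j < n) tm mu (fun j => v j + w j) j <= \sum_(0 <= j < n) (2 * tm mu v j + 2 * tm mu w j).
  apply: ler_sum_nat => j _; rewrite /tm !mulrA -mulrDl.
  by rewrite ler_wpM2r ?(ltW (wgt_gt0 _ _)) // cabs2D.
apply: le_trans h _; rewrite big_split /= -!mulr_sumr lerD // ler_wpM2l //; [exact: h1|exact: h2].
Qed.

Lemma Bd_embed mu v Q : Bd (mu + 1) v Q -> Bd mu v Q.
Proof.
move=> h; rewrite -[Q]mul1r; apply: (Bd_cmp1 (s := 0%N)) h => // j.
by rewrite addn0 mul1r ler_wpM2l ?cabs2_ge0 // wgt_le.
Qed.

Lemma supp_ps mu u M n : supp M u -> (M <= n)%N -> ps mu u n = ps mu u M.
Proof.
move=> hs hn; rewrite !psE (@big_cat_nat _ _ _ M 0 n _ _ (leq0n M) hn) /=.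
have -> : \sum_(M <= i < n) tm mu u i = 0.
  rewrite big_nat_cond big1 // => k /andP[/andP[hk _] _].
  by rewrite /tm hs // -[0]/((0:R)%:C) cabs2C expr0n mul0r.
by rewrite addr0.
Qed.

Lemma supp_Bd mu u M : supp M u -> Bd mu u (ps mu u M).
Proof.
move=> hs n; case: (leqP n M) => h; first exact: ps_nd.
by rewrite (supp_ps _ hs (ltnW h)).
Qed.

Lemma supp_l2 mu u M : supp M u -> in_l2 mu u.
Proof. by move=> /(supp_Bd mu)/Bd_cvg. Qed.

Lemma supp_l2norm mu u M : supp M u -> l2norm mu u ^+ 2 = ps mu u M.
Proof.
move=> hs; apply/le_anti/andP; split; first exact: Bd_l2norm (supp_Bd _ hs).
have := l2_Bd (supp_l2 (mu := mu) hs) M. done.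
Qed.


Lemma sq_le (x y : R) : 0 <= x -> x <= y -> x ^+ 2 <= y ^+ 2.
Proof. by move=> x0 xy; rewrite !expr2 ler_pM. Qed.

Definition KD (l : nat) mu : R :=
  (2 ^+ l.-1 * (l.-1)`!%:R) ^+ 2 * powR (l.+1%:R) (2 * `|mu|).

Lemma KD_ge0 l mu : 0 <= KD l mu.
Proof. by rewrite /KD mulr_ge0 ?sqr_ge0 ?powR_ge0. Qed.

Lemma Dop_Bd l mu u Q : Bd (mu + 1) u Q -> Bd mu (Dop l u) (KD l mu * Q).
Proof.
apply: (Bd_cmp1 (s := l)); first exact: KD_ge0.
move=> j; rewrite /tm /Dop cabs2M cabs2C wgtS /KD.
set C0 := (2 ^+ l.-1 * (l.-1)`!%:R : R).
set X := cabs2 _.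
set P := powR _ _.
have X0 : 0 <= X by exact: cabs2_ge0.
have hw := wgt_shift mu j l.
have e1 : (C0 * (j + l)%:R) ^+ 2 * X * wgt mu j = (C0 ^+ 2 * (j + l)%:R ^+ 2 * X) * wgt mu j by ring.
have e2 : C0 ^+ 2 * P * (X * ((j + l).+1%:R ^+ 2 * wgt mu (j + l))) =
  (C0 ^+ 2 * (j + l).+1%:R ^+ 2 * X) * (P * wgt mu (j + l)) by ring.
rewrite e1 e2; apply: ler_pM => //.
- by rewrite !mulr_ge0 ?sqr_ge0.
- exact: ltW (wgt_gt0 _ _).
rewrite ler_wpM2r // ler_wpM2l ?sqr_ge0 //.
by apply: sq_le; rewrite ?ler0n // ler_nat.
Qed.

Definition P3 mu : R := powR (3%:R) (2 * `|mu|).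
Lemma P3_ge0 mu : 0 <= P3 mu. Proof. exact: powR_ge0. Qed.

Lemma ratio_le (l j d : nat) : (1 <= l)%N ->
  ((l%:R / (l + j + d)%:R : R) * j.+1%:R) ^+ 2 <= l%:R ^+ 2.
Proof.
move=> hl; apply: sq_le; first by rewrite mulr_ge0 ?divr_ge0 ?ler0n.
rewrite mulrAC ler_pdivrMr ?ltr0n; last by rewrite addn_gt0 addn_gt0 hl.
by rewrite -!natrM ler_nat; nia.
Qed.

Definition KS (l : nat) mu : R := 2 * l%:R ^+ 2 + 2 * l%:R ^+ 2 * P3 mu.

Lemma Sl_Bd l mu v Q : (1 <= l)%N -> Bd mu v Q -> Bd (mu + 1) (Sl l v) (KS l mu * Q).
Proof.
move=> hl; apply: (Bd_cmp (s1 := 0%N) (s2 := 2%N)).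
- by rewrite mulr_ge0 ?sqr_ge0.
- by rewrite !mulr_ge0 ?sqr_ge0 ?P3_ge0.
move=> j; rewrite /tm /Sl.
set a1 := (l%:R / (l + j)%:R : R).
set b1 := (l%:R / (l + j + 2)%:R : R).
rewrite wgtS addn0 !addn2.
have X0 := cabs2_ge0 (v j); have X2 := cabs2_ge0 (v j.+2).
have w0 := wgt_gt0 mu j; have w2 := wgt_gt0 mu j.+2.
have hw : wgt mu j <= P3 mu * wgt mu j.+2 by rewrite -addn2; exact: wgt_shift.
have ha : (a1 * j.+1%:R) ^+ 2 <= l%:R ^+ 2 by rewrite /a1 -[(l + j)%N]addn0 ratio_le.
have hb : (b1 * j.+1%:R) ^+ 2 <= l%:R ^+ 2 by rewrite /b1 ratio_le.
have h1 := cabs2B (a1%:C * v j) (b1%:C * v j.+2).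
rewrite !cabs2M !cabs2C in h1.
apply: (@le_trans _ _ ((2 * (a1 ^+ 2 * cabs2 (v j)) + 2 * (b1 ^+ 2 * cabs2 (v j.+2))) * (j.+1%:R ^+ 2 * wgt mu j))).
  by rewrite ler_wpM2r // mulr_ge0 ?sqr_ge0 ?ltW.
have e : (2 * (a1 ^+ 2 * cabs2 (v j)) + 2 * (b1 ^+ 2 * cabs2 (v j.+2))) * (j.+1%:R ^+ 2 * wgt mu j)
  = 2 * ((a1 * j.+1%:R) ^+ 2) * (cabs2 (v j) * wgt mu j) + 2 * ((b1 * j.+1%:R) ^+ 2) * (cabs2 (v j.+2) * wgt mu j) by ring.
rewrite e; apply: lerD.
  apply: ler_wpM2r; first by rewrite mulr_ge0 // ltW.
  by apply: ler_wpM2l.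
have -> : 2 * l%:R ^+ 2 * P3 mu * (cabs2 (v j.+2) * wgt mu j.+2) =
  (2 * l%:R ^+ 2) * (cabs2 (v j.+2) * (P3 mu * wgt mu j.+2)) by ring.
apply: ler_pM.
- by rewrite mulr_ge0 ?sqr_ge0.
- by rewrite mulr_ge0 // ltW.
- by apply: ler_wpM2l.
by apply: ler_wpM2l.
Qed.

Lemma S0_pt v j : cabs2 (S0 v j) <= 2 * cabs2 (v j) + 2 * cabs2 (v j.+2).
Proof.
have X0 := cabs2_ge0 (v j); have X2 := cabs2_ge0 (v j.+2).
have h4 : (2^-1 : R) ^+ 2 <= 1.
  by rewrite expr_le1 // ?invr_ge0 ?ler0n // invf_le1 ?ler1n // ltr0n.
rewrite /S0; case: eqP => [->|hj].
  apply: le_trans (cabs2B _ _) _; rewrite lerD2l cabs2M cabs2C ler_wpM2l //.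
  by rewrite -[X in _ <= X]mul1r; apply: ler_wpM2r => //; exact: cabs2_ge0.
rewrite cabs2M cabs2C; apply: le_trans (ler_wpM2l (sqr_ge0 _) (cabs2B _ _)) _.
rewrite -[X in _ <= X]mul1r ler_wpM2r //.
by rewrite addr_ge0 // mulr_ge0.
Qed.

Lemma S0_Bd mu v Q : Bd mu v Q -> Bd mu (S0 v) ((2 + 2 * P3 mu) * Q).
Proof.
apply: (Bd_cmp (s1 := 0%N) (s2 := 2%N)) => //.
  by rewrite mulr_ge0 ?P3_ge0.
move=> j; rewrite /tm addn0 addn2.
have hw : wgt mu j <= P3 mu * wgt mu j.+2 by rewrite -addn2; exact: wgt_shift.
have w0 := wgt_gt0 mu j.
apply: le_trans (ler_wpM2r (ltW w0) (S0_pt v j)) _.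
rewrite mulrDl -!mulrA lerD2l.
have -> : 2 * (P3 mu * (cabs2 (v j.+2) * wgt mu j.+2)) = 2 * (cabs2 (v j.+2) * (P3 mu * wgt mu j.+2)) by ring.
apply: ler_wpM2l => //; apply: ler_wpM2l => //; exact: cabs2_ge0.
Qed.

Lemma Mop_Bd (M : (nat -> R[i]) -> (nat -> R[i])) (P : (nat -> R[i]) -> Prop) mu :
  (exists c : R, forall v, in_l2 mu v -> P v /\ in_l2 mu (M v) /\
      l2norm mu (M v) <= c * l2norm mu v) ->
  exists K, 0 <= K /\ forall v Q, Bd mu v Q -> Bd mu (M v) (K * Q).
Proof.
move=> [c hc]; exists (c ^+ 2); split; first exact: sqr_ge0.
move=> v Q hb; have hv := Bd_cvg hb.
have [_ [hm hle]] := hc v hv.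
apply: Bd_le (l2_Bd hm).
apply: le_trans (sq_le (l2norm_ge0 _ _) hle) _.
by rewrite exprMn ler_wpM2l ?sqr_ge0 // Bd_l2norm.
Qed.

Lemma schain_Bd k l mu : (1 <= l)%N ->
  exists K, 0 <= K /\ forall v Q, Bd mu v Q -> Bd mu (schain k l v) (K * Q).
Proof.
elim: k l => [|k IH] l hl.
  by exists 1; split => // v Q; rewrite mul1r.
have [K [K0 hK]] := IH l.+1 isT.
exists (K * KS l mu); split.
  by rewrite mulr_ge0 // /KS !addr_ge0 ?mulr_ge0 ?sqr_ge0 ?P3_ge0.
move=> v Q hb /=.
have -> : Sop l = Sl l by rewrite /Sop; case: eqP => // h; rewrite h in hl.
rewrite -mulrA; apply: hK; apply: Bd_embed; exact: Sl_Bd.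
Qed.

Lemma schain_gain k l mu : (1 <= l)%N ->
  exists K, 0 <= K /\ forall v Q, Bd mu v Q -> Bd (mu + 1) (schain k.+1 l v) (K * Q).
Proof.
move=> hl; have [K [K0 hK]] := schain_Bd k (mu + 1) (isT : (1 <= l.+1)%N).
exists (K * KS l mu); split.
  by rewrite mulr_ge0 // /KS !addr_ge0 ?mulr_ge0 ?sqr_ge0 ?P3_ge0.
move=> v Q hb /=.
have -> : Sop l = Sl l by rewrite /Sop; case: eqP => // h; rewrite h in hl.
rewrite -mulrA; apply: hK; exact: Sl_Bd.
Qed.

Lemma schain0_Bd k mu :
  exists K, 0 <= K /\ forall v Q, Bd mu v Q -> Bd mu (schain k.+1 0 v) (K * Q).
Proof.
have [K [K0 hK]] := schain_Bd k mu (isT : (1 <= 1)%N).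
exists (K * (2 + 2 * P3 mu)); split.
  by rewrite mulr_ge0 // addr_ge0 ?mulr_ge0 ?P3_ge0.
move=> v Q hb /=; rewrite -mulrA; apply: hK; exact: S0_Bd.
Qed.


Lemma unif (n : nat) (P : nat -> R -> Prop) :
  (forall l K K', K <= K' -> P l K -> P l K') ->
  (forall l, (l < n)%N -> exists K, 0 <= K /\ P l K) ->
  exists K, 0 <= K /\ forall l, (l < n)%N -> P l K.
Proof.
move=> hmono; elim: n => [|n IH] h.
  by exists 0; split.
have [K1 [K10 hK1]] := IH (fun l hl => h l (ltnW hl)).
have [K2 [K20 hK2]] := h n (ltnSn n).
exists (K1 + K2); split; first exact: addr_ge0.
move=> l; rewrite ltnS leq_eqVlt => /orP[/eqP->|hl].
  by apply: hmono hK2; rewrite lerDr.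
by apply: hmono (hK1 l hl); rewrite lerDl.
Qed.

Lemma Bd0 mu Q : 0 <= Q -> Bd mu (fun _ => 0) Q.
Proof.
move=> hQ n; rewrite psE big1 // => k _.
by rewrite /tm -[0]/((0:R)%:C) cabs2C expr0n mul0r.
Qed.

Lemma Bd_sum mu (f : nat -> nat -> R[i]) Q n : 0 <= Q ->
  (forall l, (1 <= l)%N -> (l < n)%N -> Bd mu (f l) Q) ->
  Bd mu (fun j => \sum_(1 <= l < n) f l j) (4 ^+ n * Q).
Proof.
move=> hQ; elim: n => [|n IH] hf.
  have -> : (fun j => \sum_(1 <= l < 0) f l j) = (fun _ => 0).
    by apply: funext => j; rewrite big_geq.
  by apply: Bd0; rewrite mulr_ge0 // exprn_ge0.
case: (leqP n 0) => hn.
  have -> : (fun j => \sum_(1 <= l < n.+1) f l j) = (fun _ => 0).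
    by apply: funext => j; rewrite big_geq // ltnS.
  by apply: Bd0; rewrite mulr_ge0 // exprn_ge0.
have -> : (fun j => \sum_(1 <= l < n.+1) f l j) =
    (fun j => \sum_(1 <= l < n) f l j + f n j).
  by apply: funext => j; rewrite big_nat_recr.
have h1 := IH (fun l h1 h2 => hf l h1 (ltnW h2)).
have h2 := hf n hn (ltnSn n).
apply: Bd_le (Bd_add h1 h2).
have hA : Q <= 4 ^+ n * Q.
  rewrite -[X in X <= _]mul1r; apply: ler_wpM2r => //.
  by rewrite exprn_ege1 // ler1n.
rewrite exprS; set A := 4 ^+ n * Q.
have -> : 4 * 4 ^+ n * Q = 4 * A by rewrite /A mulrA.
rewrite -/A in hA; clearbody A; lra.
Qed.


Definition Lo (N : nat) (a : nat -> R -> R[i]) u : nat -> R[i] := fun j =>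
  \sum_(1 <= l < N) schain (N - l) l (Mop l (a l) (Dop l u)) j
  + schain N 0 (Mop 0 (a 0%N) u) j.

Lemma LopE N a u j : Lop N a u j = Dop N u j + Lo N a u j.
Proof. by rewrite /Lop /Lo addrA. Qed.

Definition HMt (N : nat) (a : nat -> R -> R[i]) := forall l : nat, (l < N)%N ->
  forall mu : R, exists c : R, forall v : nat -> R[i], in_l2 mu v ->
    (forall j, csum_cvg (fun k => Mentry l (a l) j k * v k)) /\
    in_l2 mu (Mop l (a l) v) /\ l2norm mu (Mop l (a l) v) <= c * l2norm mu v.

Lemma Lo_Bd N a mu : (1 <= N)%N -> HMt N a ->
  exists K, 0 <= K /\ forall u Q, Bd (mu + 1) u Q -> Bd (mu + 1) (Lo N a u) (K * Q).
Proof.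
move=> hN HM.
pose P l K := (1 <= l)%N -> forall u Q, Bd (mu + 1) u Q ->
  Bd (mu + 1) (schain (N - l) l (Mop l (a l) (Dop l u))) (K * Q).
have [KA [KA0 hKA]] : exists K, 0 <= K /\ forall l, (l < N)%N -> P l K.
  apply: unif.
    move=> l K K' hK hP hl u Q hb; apply: Bd_le (hP hl u Q hb).
    by apply: ler_wpM2r => //; exact: Bd_ge0 hb.
  move=> l hl.
  have [K1 [K10 hK1]] := Mop_Bd (HM l hl mu).
  case: (posnP l) => [l0|lpos].
    by exists 0; split => // h; rewrite l0 in h.
  have [K2 [K20 hK2]] := schain_gain (N - l.+1) mu lpos.
  exists (K2 * (K1 * KD l mu)); split; first by rewrite !mulr_ge0 ?KD_ge0.
  move=> _ u Q hb.
  rewrite -(subnSK hl) -mulrA; apply: hK2; rewrite -mulrA; apply: hK1; exact: Dop_Bd.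
have [K3 [K30 hK3]] := Mop_Bd (HM 0%N hN (mu + 1)).
have [K4 [K40 hK4]] := schain0_Bd N.-1 (mu + 1).
exists (2 * (4 ^+ N * KA) + 2 * (K4 * K3)); split.
  by rewrite addr_ge0 // !mulr_ge0 // exprn_ge0.
move=> u Q hb; have Q0 := Bd_ge0 hb.
rewrite mulrDl -!mulrA; apply: Bd_add.
  apply: Bd_sum; first by rewrite mulr_ge0.
  by move=> l h1 h2; apply: hKA.
rewrite -(prednK hN) /=; apply: hK4; exact: hK3.
Qed.


Lemma lim_fin (g : nat -> R) M : (forall k, (M <= k)%N -> g k = 0) ->
  limn (series g : nat -> R) = \sum_(0 <= k < M) g k.
Proof.
move=> hg; apply: lim_near_cst => //.
exists M => // n /= hn.
rewrite /series /= (@big_cat_nat _ _ _ M) //=.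
have -> : \sum_(M <= i < n) g i = 0.
  by rewrite big_nat_cond big1 // => k /andP[/andP[hk _] _]; exact: hg.
by rewrite addr0.
Qed.

Lemma cre_sum (I : Type) (r : seq I) (P : pred I) (F : I -> R[i]) :
  cre (\sum_(i <- r | P i) F i) = \sum_(i <- r | P i) cre (F i).
Proof. by apply: (big_morph (@cre R)) => // [[x1 x2] [y1 y2]]. Qed.
Lemma cim_sum (I : Type) (r : seq I) (P : pred I) (F : I -> R[i]) :
  cim (\sum_(i <- r | P i) F i) = \sum_(i <- r | P i) cim (F i).
Proof. by apply: (big_morph (@cim R)) => // [[x1 x2] [y1 y2]]. Qed.

Lemma csum_fin (f : nat -> R[i]) M : (forall k, (M <= k)%N -> f k = 0) ->
  csum f = \sum_(0 <= k < M) f k.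
Proof.
move=> hf; rewrite /csum (lim_fin (M := M)); last by move=> k hk; rewrite hf.
rewrite (lim_fin (M := M)); last by move=> k hk; rewrite hf.
rewrite -cre_sum -cim_sum; by case: (\sum_(0 <= k < M) f k).
Qed.

Definition linop (T : (nat -> R[i]) -> (nat -> R[i])) := forall n (c : 'I_n -> R[i])
  (v : 'I_n -> nat -> R[i]),
  T (fun k => \sum_j c j * v j k) = fun k => \sum_j c j * T (v j) k.

Lemma Dop_lin l : linop (Dop l).
Proof.
move=> n c v; apply: funext => k; rewrite /Dop mulr_sumr.
by apply: eq_bigr => j _; rewrite mulrCA.
Qed.

Lemma S0_lin : linop (@S0 R).
Proof.
move=> n c v; apply: funext => k; rewrite /S0; case: eqP => _.
  rewrite mulr_sumr -sumrB; apply: eq_bigr => j _; ring.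
rewrite -sumrB mulr_sumr; apply: eq_bigr => j _; ring.
Qed.

Lemma Sl_lin l : linop (Sl l).
Proof.
move=> n c v; apply: funext => k; rewrite /Sl !mulr_sumr -sumrB.
apply: eq_bigr => j _; ring.
Qed.

Lemma Sop_lin l : linop (Sop l).
Proof. rewrite /Sop; case: eqP => _; [exact: S0_lin | exact: Sl_lin]. Qed.

Lemma schain_lin m l : linop (schain m l).
Proof.
elim: m l => [|m IH] l n c v //=.
by rewrite Sop_lin IH.
Qed.

Lemma supp_sum M n (c : 'I_n -> R[i]) (v : 'I_n -> nat -> R[i]) :
  (forall j, supp M (v j)) -> supp M (fun k => \sum_j c j * v j k).
Proof. by move=> h k hk; rewrite big1 // => j _; rewrite h // mulr0. Qed.

Lemma supp_Dop M l u : supp M u -> supp M (Dop l u).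
Proof. by move=> h k hk; rewrite /Dop h ?mulr0 // (leq_trans hk) // leq_addr. Qed.

Lemma Mop_lin l (f : R -> R[i]) M n (c : 'I_n -> R[i]) (v : 'I_n -> nat -> R[i]) :
  (forall j, supp M (v j)) ->
  Mop l f (fun k => \sum_j c j * v j k) = fun i => \sum_j c j * Mop l f (v j) i.
Proof.
move=> hs; apply: funext => i; rewrite /Mop.
rewrite (csum_fin (M := M)); last by move=> k hk; rewrite (supp_sum c hs) // mulr0.
have e : forall j, csum (fun k => Mentry l f i k * v j k) = \sum_(0 <= k < M) Mentry l f i k * v j k.
  by move=> j; apply: csum_fin => k hk; rewrite hs // mulr0.
under [X in _ = X]eq_bigr => j _ do rewrite e.
rewrite (eq_bigr (fun k => \sum_j Mentry l f i k * (c j * v j k))); last first.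
  by move=> k _; rewrite mulr_sumr.
rewrite exchange_big /=; apply: eq_bigr => j _; rewrite mulr_sumr.
by apply: eq_bigr => k _; rewrite mulrCA.
Qed.


Lemma Lop_lin N a M n (c : 'I_n -> R[i]) (v : 'I_n -> nat -> R[i]) :
  (forall j, supp M (v j)) ->
  Lop N a (fun k => \sum_j c j * v j k) = fun k => \sum_j c j * Lop N a (v j) k.
Proof.
move=> hs; apply: funext => k; rewrite /Lop.
have hl : forall l, schain (N - l) l (Mop l (a l) (Dop l (fun k => \sum_j c j * v j k))) =
   fun k => \sum_j c j * schain (N - l) l (Mop l (a l) (Dop l (v j))) k.
  move=> l; rewrite Dop_lin (Mop_lin _ _ (M := M)) ?schain_lin // => j; exact: supp_Dop.
under eq_bigr => l _ do rewrite hl.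
rewrite Dop_lin (Mop_lin _ _ (M := M)) // schain_lin.
rewrite exchange_big -!big_split /=; apply: eq_bigr => j _.
by rewrite !mulrDr mulr_sumr.
Qed.

Definition HBt (N : nat) (B : (nat -> R[i]) -> 'cV[R[i]]_N) (D : R) :=
  forall (u v : nat -> R[i]) (c : R[i]), in_l2 D u -> in_l2 D v ->
     B (fun k => u k + c * v k) = B u + c *: B v.

Lemma B_lin (N : nat) (B : (nat -> R[i]) -> 'cV[R[i]]_N) (D : R) M n (c : 'I_n -> R[i]) (v : 'I_n -> nat -> R[i]) :
  HBt B D -> (forall j, supp M (v j)) ->
  B (fun k => \sum_j c j * v j k) = \sum_j c j *: B (v j).
Proof.
move=> HB; elim: n c v => [|n IH] c v hs.
  have h0 : supp M (fun _ : nat => (0 : R[i])) by [].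
  have e := HB _ _ 1 (supp_l2 (mu := D) h0) (supp_l2 (mu := D) h0).
  have e2 : (fun k : nat => 0 + 1 * (0 : R[i])) = (fun _ => 0).
    by apply: funext => k; rewrite mulr0 addr0.
  rewrite e2 in e.
  rewrite big_ord0.
  have -> : (fun k : nat => \sum_(j < 0) c j * v j k) = (fun _ => 0).
    by apply: funext => k; rewrite big_ord0.
  rewrite scale1r in e.
  have : B (fun _ => 0) + B (fun _ => 0) - B (fun _ => 0) = B (fun _ => 0) - B (fun _ => 0).
    by rewrite -e.
  by rewrite addrK subrr.
have -> : (fun k => \sum_(j < n.+1) c j * v j k) =
  (fun k => (fun k => \sum_(j < n) c (widen_ord (leqnSn n) j) * v (widen_ord (leqnSn n) j) k) k
    + c ord_max * v ord_max k).
  by apply: funext => k; rewrite big_ord_recr.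
rewrite HB; last exact: supp_l2 (hs _).
  by rewrite IH ?big_ord_recr // => j; exact: hs.
by apply: supp_l2; apply: supp_sum => j; exact: hs.
Qed.

Lemma BLop_lin (N : nat) (B : (nat -> R[i]) -> 'cV[R[i]]_N) (a : nat -> R -> R[i]) (D : R) M n (c : 'I_n -> R[i]) (v : 'I_n -> nat -> R[i]) i :
  HBt B D -> (forall j, supp M (v j)) ->
  BLop B a (fun k => \sum_j c j * v j k) i = \sum_j c j * BLop B a (v j) i.
Proof.
move=> HB hs; rewrite /BLop; case: (insub i) => [i'|].
  rewrite (B_lin c HB hs) summxE; apply: eq_bigr => j _.
  by rewrite mxE.
by rewrite (Lop_lin _ _ c hs).
Qed.


Lemma wgt_shift' mu j s : wgt mu (j + s) <= powR (s.+1%:R) (2 * `|mu|) * wgt mu j.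
Proof.
have -> : 2 * `|mu| = `|2 * mu| by rewrite normrM ger0_norm.
rewrite /wgt.
apply: powR_ratio; rewrite ?ltr0n //.
  by rewrite -natrM ler_nat; nia.
by rewrite -natrM ler_nat; nia.
Qed.

Lemma inj_unit n (M : 'M[R[i]]_n) : (forall x : 'cV_n, M *m x = 0 -> x = 0) ->
  M \in unitmx.
Proof.
move=> hinj; rewrite -unitmx_tr -row_free_unit -kermx_eq0.
apply/eqP/row_matrixP => i; rewrite row0.
set r := row i (kermx M^T).
have h : r *m M^T = 0 by apply/sub_kermxP; exact: row_sub.
have h2 : M *m r^T = 0 by rewrite -(trmxK M) -trmx_mul h trmx0.
by rewrite -(trmxK r) (hinj _ h2) trmx0.
Qed.

Lemma sq_to (a b k : R) : 0 <= a -> 0 <= b -> 0 <= k -> a ^+ 2 <= k ^+ 2 * b ^+ 2 -> a <= k * b.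
Proof.
move=> a0 b0 k0; rewrite -exprMn.
by rewrite (ler_pXn2r (isT : (0 < 2)%N)) // nnegrE mulr_ge0.
Qed.

Lemma vnorm_sq mu n (y : 'cV[R[i]]_n) :
  vnorm mu y ^+ 2 = \sum_(k < n) cabs2 (y k 0) * wgt mu k.
Proof.
rewrite /vnorm sqr_sqrtr // sumr_ge0 // => k _.
by rewrite mulr_ge0 ?cabs2_ge0 ?(ltW (wgt_gt0 _ _)).
Qed.

Lemma vnorm_ge0 mu n (y : 'cV[R[i]]_n) : 0 <= vnorm mu y.
Proof. exact: sqrtr_ge0. Qed.

Lemma ps_ord mu v n : ps mu v n = \sum_(k < n) tm mu v k.
Proof. by rewrite psE big_mkord. Qed.

Definition kap (N : nat) : R := (2 ^+ N.-1 * (N.-1)`!%:R)^-1.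

Lemma kap_gt0 N : 0 < kap N.
Proof.
by rewrite /kap invr_gt0 mulr_gt0 ?exprn_gt0 ?ltr0n ?fact_gt0.
Qed.

Lemma rdiag_bd N k : (1 <= N)%N ->
  kap N ^+ 2 <= (rdiag R N k * k.+1%:R) ^+ 2 <= (2 * N%:R * kap N) ^+ 2.
Proof.
move=> hN; rewrite /rdiag -/(kap N).
have k0 := kap_gt0 N.
pose t : R := (if (k < N)%N then 1 else (k%:R)^-1) * k.+1%:R.
have -> : kap N * (if (k < N)%N then 1 else (k%:R)^-1) * k.+1%:R = kap N * t.
  by rewrite /t mulrA.
have [t1 t2] : 1 <= t /\ t <= 2 * N%:R.
  rewrite /t; case: ltnP => hk.
    rewrite mul1r ler1n; split => //.
    apply: le_trans (_ : N%:R <= _); first by rewrite ler_nat.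
    by rewrite ler_peMl ?ler0n // ler1n.
  have kpos : (0 < k)%N by apply: leq_trans hN hk.
  have kp : (0 : R) < k%:R by rewrite ltr0n.
  rewrite mulrC -/(_ / _); split.
    by rewrite ler_pdivlMr // mul1r ler_nat.
  rewrite ler_pdivrMr // -natrM -natrM ler_nat; nia.
apply/andP; split.
  rewrite -[X in X <= _]mulr1 exprMn ler_wpM2l ?sqr_ge0 //.
  by rewrite -[X in X <= _](expr1n _ 2) sq_le.
have t0 : 0 <= t := le_trans ler01 t1.
apply: sq_le; first by rewrite mulr_ge0 // ltW.
rewrite mulrC; apply: ler_wpM2r => //; exact: ltW.
Qed.


Section Mat.
Variables (N : nat) (B : (nat -> R[i]) -> 'cV[R[i]]_N) (a : nat -> R -> R[i]) (D : R).

Definition cf n (x : 'cV[R[i]]_n) (j : 'I_n) : R[i] := (rdiag R N j)%:C * x j 0.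
Definition useq n (x : 'cV[R[i]]_n) : nat -> R[i] :=
  fun k => \sum_(j < n) cf x j * eseq R j k.

Lemma supp_e n (j : 'I_n) : supp n (eseq R j).
Proof.
move=> k hk; rewrite /eseq.
have : (k == j) = false by apply/negbTE; rewrite neq_ltn (leq_trans (ltn_ord j) hk) orbT.
by move=> ->.
Qed.

Lemma useq_supp n (x : 'cV[R[i]]_n) : supp n (useq x).
Proof. by apply: supp_sum => j; exact: supp_e. Qed.

Lemma useq_at n (x : 'cV[R[i]]_n) (k : 'I_n) : useq x k = cf x k.
Proof.
rewrite /useq (bigD1 k) //= /eseq eqxx mulr1 big1 ?addr0 // => j hj.
have : (nat_of_ord k == nat_of_ord j) = false by apply/negbTE; rewrite eq_sym.
by move=> ->; rewrite mulr0.
Qed.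

Lemma ARx n (x : 'cV[R[i]]_n) (i : 'I_n) : HBt B D ->
  (Amat B a n *m Rmat R N n *m x) i 0 = BLop B a (useq x) i.
Proof.
move=> HB; rewrite /useq (BLop_lin a (cf x) _ HB (fun j => supp_e j)) mxE.
apply: eq_bigr => j _; rewrite mxE (bigD1 j) //= big1 ?addr0; last first.
  by move=> k hk; rewrite /Rmat !mxE (negbTE hk) mulr0.
rewrite /Amat /Rmat !mxE eqxx /cf; ring.
Qed.

Lemma Q_eq mu n (x : 'cV[R[i]]_n) : ps (mu + 1) (useq x) n =
  \sum_(k < n) (rdiag R N k * k.+1%:R) ^+ 2 * (cabs2 (x k 0) * wgt mu k).
Proof.
rewrite ps_ord; apply: eq_bigr => k _.
rewrite /tm useq_at /cf cabs2M cabs2C wgtS; ring.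
Qed.

Lemma Q_bd mu n (x : 'cV[R[i]]_n) : (1 <= N)%N ->
  kap N ^+ 2 * vnorm mu x ^+ 2 <= ps (mu + 1) (useq x) n <=
  (2 * N%:R * kap N) ^+ 2 * vnorm mu x ^+ 2.
Proof.
move=> hN; rewrite Q_eq vnorm_sq !mulr_sumr; apply/andP; split.
  apply: ler_sum => k _; apply: ler_wpM2r.
    by rewrite mulr_ge0 ?cabs2_ge0 ?(ltW (wgt_gt0 _ _)).
  by case/andP: (rdiag_bd k hN).
apply: ler_sum => k _; apply: ler_wpM2r.
  by rewrite mulr_ge0 ?cabs2_ge0 ?(ltW (wgt_gt0 _ _)).
by case/andP: (rdiag_bd k hN).
Qed.

Lemma tail m K n (x : 'cV[R[i]]_n) : (N <= n)%N -> 0 <= K ->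
  (forall u Q, Bd (m + 1) u Q -> Bd (m + 1) (Lo N a u) (K * Q)) ->
  forall M, ps m (BLop B a (useq x)) M <= ps m (BLop B a (useq x)) n +
    (powR (N.+1%:R) (2 * `|m|) / ((n - N).+1%:R) ^+ 2) * (K * ps (m + 1) (useq x) n).
Proof.
move=> hNn K0 hK M.
set u := useq x; set Q := ps (m + 1) u n.
set rho := (powR (N.+1%:R) (2 * `|m|) / ((n - N).+1%:R) ^+ 2).
have hQ : Bd (m + 1) u Q := supp_Bd (m + 1) (useq_supp x).
have hLo := hK u Q hQ.
have rho0 : 0 <= rho by rewrite /rho divr_ge0 ?powR_ge0 ?sqr_ge0.
have Q0 : 0 <= Q by exact: ps_ge0.
case: (leqP M n) => hM.
  apply: le_trans (ps_nd _ _ hM) _.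
  by rewrite lerDl mulr_ge0 // mulr_ge0.
rewrite psE (@big_cat_nat _ _ _ n 0 M _ _ (leq0n n) (ltnW hM)) /= -psE lerD2l.
have step : forall i, (n <= i)%N ->
    tm m (BLop B a u) i <= rho * tm (m + 1) (Lo N a u) (i - N).
  move=> i hi; have hiN : (N <= i)%N by apply: leq_trans hNn hi.
  have eB : BLop B a u i = Lo N a u (i - N).
    rewrite /BLop insubF; last by rewrite ltnNge hiN.
    by rewrite LopE /Dop subnK // /u (useq_supp x) // mulr0 add0r.
  rewrite /tm eB wgtS.
  have hw := wgt_shift' m (i - N) N; rewrite subnK // in hw.
  have L0 := cabs2_ge0 (Lo N a u (i - N)).
  apply: le_trans (ler_wpM2l L0 hw) _.
  set L := cabs2 _; set w := wgt m (i - N); set P := powR _ _.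
  pose e : R := (i - N).+1%:R; pose d : R := (n - N).+1%:R.
  rewrite -/e.
  have d0 : (0 : R) < d ^+ 2 by rewrite exprn_gt0 // ltr0n.
  have -> : rho * (L * (e ^+ 2 * w)) = (L * (P * w)) * (e ^+ 2 / d ^+ 2).
    by rewrite /rho -/P -/d; ring.
  apply: ler_peMr.
    by rewrite mulr_ge0 // mulr_ge0 ?powR_ge0 // ltW // wgt_gt0.
  rewrite ler_pdivlMr // mul1r; apply: sq_le; first by rewrite ler0n.
  by rewrite ler_nat ltnS leq_sub2r.
apply: le_trans (ler_sum_nat (fun i hi => step i (proj1 (andP hi)))) _.
rewrite -mulr_sumr; apply: ler_wpM2l => //.
rewrite -{1}(subnK hNn) big_addn.
under eq_bigr => i _ do rewrite addnK.
apply: le_trans (hLo (M - N)%N); rewrite psE.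
rewrite (@big_cat_nat _ _ _ (n - N) 0 (M - N)) //=; last by rewrite leq_sub2r // ltnW.
by rewrite lerDr sumr_ge0 // => i _; exact: tm_ge0.
Qed.

Lemma vnorm0 mu n : vnorm mu (0 : 'cV[R[i]]_n) = 0.
Proof.
rewrite /vnorm big1 ?sqrtr0 // => k _.
by rewrite mxE -[0]/((0:R)%:C) cabs2C expr0n mul0r.
Qed.

Lemma vnorm_eq0 mu n (x : 'cV[R[i]]_n) : vnorm mu x = 0 -> x = 0.
Proof.
move=> h; have : vnorm mu x ^+ 2 = 0 by rewrite h expr0n.
rewrite vnorm_sq => /eqP; rewrite psumr_eq0 => [/allP hall|k _]; last first.
  by rewrite mulr_ge0 ?cabs2_ge0 ?(ltW (wgt_gt0 _ _)).
apply/matrixP => i j; rewrite ord1 mxE.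
have := hall i (mem_index_enum _); rewrite /= mulf_eq0 => /orP[/eqP/cabs2_eq0 //|].
by rewrite gt_eqF // wgt_gt0.
Qed.

Lemma main_sec m c : (1 <= N)%N -> HMt N a -> HBt B D -> 0 < c ->
  (forall u, in_l2 (m + 1) u -> in_l2 m (BLop B a u)) ->
  (forall u, in_l2 (m + 1) u -> l2norm m (BLop B a u) <= c * l2norm (m + 1) u /\
     l2norm (m + 1) u <= c * l2norm m (BLop B a u)) ->
  exists (C : R) (n0 : nat), forall n : nat, (n0 <= n)%N ->
    (forall x : 'cV[R[i]]_n,
       vnorm m (Amat B a n *m Rmat R N n *m x) <= C * vnorm m x) /\
    (Amat B a n *m Rmat R N n \in unitmx) /\
    (forall x : 'cV[R[i]]_n,
       vnorm m (invmx (Amat B a n *m Rmat R N n) *m x) <= C * vnorm m x).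
Proof.
move=> hN HM HB c0 Hl2 Hc.
have [K [K0 hK]] := Lo_Bd m hN HM.
pose PN := powR (N.+1%:R) (2 * `|m|).
have PN0 : 0 <= PN by exact: powR_ge0.
pose T := 2 * c ^+ 2 * PN * K.
have T0 : 0 <= T by rewrite /T !mulr_ge0 // ltW.
pose k0 := Num.Def.archi_bound T.
have hT : T < k0%:R := archi_boundP T0.
pose kp := kap N.
have kp0 : 0 < kp := kap_gt0 N.
exists (c * (2 * N%:R * kp) + 2 * c / kp), (N + k0)%N.
move=> n hn.
have hNn : (N <= n)%N by apply: leq_trans hn; rewrite leq_addr.
pose d : R := (n - N).+1%:R.
have hd1 : 1 <= d by rewrite ler1n.
have hTd : T <= d.
  apply: le_trans (ltW hT) _; rewrite ler_nat -/k0; lia.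
have d0 : 0 < d ^+ 2 by rewrite exprn_gt0 // (lt_le_trans ltr01 hd1).
have hrho : c ^+ 2 * (PN / d ^+ 2) * K <= 2^-1.
  have -> : c ^+ 2 * (PN / d ^+ 2) * K = T / (2 * d ^+ 2) by rewrite /T; field; rewrite gt_eqF.
  rewrite ler_pdivrMr ?mulr_gt0 // mulrA mulVf // mul1r.
  apply: le_trans hTd _; rewrite expr2 ler_peMl //; exact: le_trans ler01 hd1.
pose M := Amat B a n *m Rmat R N n.
have key : forall x : 'cV[R[i]]_n,
   vnorm m (M *m x) ^+ 2 = ps m (BLop B a (useq x)) n /\
   ps m (BLop B a (useq x)) n <= c ^+ 2 * ps (m + 1) (useq x) n /\
   ps (m + 1) (useq x) n <= 2 * c ^+ 2 * ps m (BLop B a (useq x)) n.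
  move=> x; set u := useq x.
  have hu : in_l2 (m + 1) u := supp_l2 (useq_supp x).
  have hBu := Hl2 u hu; have [h1 h2] := Hc u hu.
  have eQ : l2norm (m + 1) u ^+ 2 = ps (m + 1) u n := supp_l2norm (m + 1) (useq_supp x).
  split.
    rewrite vnorm_sq ps_ord; apply: eq_bigr => k _.
    by rewrite /tm /M (ARx _ _ HB).
  split.
    apply: le_trans (l2_Bd hBu n) _; rewrite -eQ -exprMn.
    exact: sq_le (l2norm_ge0 _ _) h1.
  set S := ps m (BLop B a u) n; set Q := ps (m + 1) u n.
  have hb : Bd m (BLop B a u) (S + (PN / d ^+ 2) * (K * Q)).
    move=> M'; exact: (tail x hNn K0 hK M').
  have hl := Bd_l2norm hb.
  have hq : Q <= c ^+ 2 * (S + (PN / d ^+ 2) * (K * Q)).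
    have hQ2 : Q = l2norm (m + 1) u ^+ 2 by rewrite eQ.
    rewrite {1}hQ2; apply: le_trans (sq_le (l2norm_ge0 _ _) h2) _.
    by rewrite exprMn; apply: ler_wpM2l => //; exact: sqr_ge0.
  have Q0 : 0 <= Q by exact: ps_ge0.
  have hZ : c ^+ 2 * ((PN / d ^+ 2) * (K * Q)) <= 2^-1 * Q.
    have -> : c ^+ 2 * ((PN / d ^+ 2) * (K * Q)) = (c ^+ 2 * (PN / d ^+ 2) * K) * Q by ring.
    by apply: ler_wpM2r.
  move: hq hZ; rewrite mulrDr.
  set Z := c ^+ 2 * ((PN / d ^+ 2) * (K * Q)); set cS := c ^+ 2 * S.
  have -> : 2 * c ^+ 2 * S = 2 * cS by rewrite /cS mulrA.
  clearbody Z cS; move=> hq hZ; lra.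
have lower : forall x : 'cV[R[i]]_n, vnorm m x <= (2 * c / kp) * vnorm m (M *m x).
  move=> x; have [e1 [e2 e3]] := key x.
  have [q1 _] := andP (Q_bd m x hN).
  apply: sq_to; [exact: vnorm_ge0 | exact: vnorm_ge0 | by rewrite divr_ge0 ?mulr_ge0 // ltW |].
  have kp2 : 0 < kp ^+ 2 by rewrite exprn_gt0.
  rewrite -(ler_pM2l kp2).
  have -> : kp ^+ 2 * ((2 * c / kp) ^+ 2 * vnorm m (M *m x) ^+ 2) =
     4 * c ^+ 2 * vnorm m (M *m x) ^+ 2 by field; rewrite gt_eqF.
  apply: le_trans q1 _; apply: le_trans e3 _; rewrite -e1.
  apply: ler_wpM2r; first exact: sqr_ge0.
  rewrite ler_wpM2r ?sqr_ge0 // ler_nat //.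
have Cge1 : c * (2 * N%:R * kp) <= c * (2 * N%:R * kp) + 2 * c / kp.
  by rewrite lerDl divr_ge0 ?mulr_ge0 ?ltW.
have Cge2 : 2 * c / kp <= c * (2 * N%:R * kp) + 2 * c / kp.
  rewrite lerDr; apply: mulr_ge0; [exact: ltW | apply: mulr_ge0 => //; exact: ltW].
split.
  move=> x; have [e1 [e2 _]] := key x.
  have [_ q2] := andP (Q_bd m x hN).
  apply: le_trans (_ : c * (2 * N%:R * kp) * vnorm m x <= _); last first.
    by apply: ler_wpM2r => //; exact: vnorm_ge0.
  apply: sq_to; [exact: vnorm_ge0 | exact: vnorm_ge0 | by rewrite !mulr_ge0 // ltW |].
  rewrite e1; apply: le_trans e2 _; apply: le_trans (ler_wpM2l (sqr_ge0 c) q2) _; by rewrite -/kp mulrA -exprMn.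
have unitM : M \in unitmx.
  apply: inj_unit => x hx; apply: (vnorm_eq0 (mu := m)); apply/le_anti/andP; split.
    by apply: le_trans (lower x) _; rewrite hx vnorm0 mulr0.
  exact: vnorm_ge0.
split => // y.
apply: le_trans (lower _) _; rewrite mulKVmx //.
by apply: ler_wpM2r => //; exact: vnorm_ge0.
Qed.

End Mat.
End L.

Theorem lemma4p4 (R : realType) (N : nat) (a : nat -> R -> R[i])
    (B : (nat -> R[i]) -> 'cV[R[i]]_N) (D lam : int) :
  (1 <= N)%N ->
  (* each M_l[a^l] (0 <= l <= N-1) is bounded on every l^2_mu *)
  (forall l : nat, (l < N)%N -> forall mu : R, exists c : R,
     forall v : nat -> R[i], in_l2 mu v ->
       (forall j, csum_cvg (fun k => Mentry l (a l) j k * v k)) /\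
       in_l2 mu (Mop l (a l) v) /\
       l2norm mu (Mop l (a l) v) <= c * l2norm mu v) ->
  (* B is linear and bounded from l^2_D to C^N *)
  (forall (u v : nat -> R[i]) (c : R[i]), in_l2 D%:~R u -> in_l2 D%:~R v ->
     B (fun k => u k + c * v k) = B u + c *: B v) ->
  (exists c : R, forall u, in_l2 D%:~R u -> cnorm (B u) <= c * l2norm D%:~R u) ->
  (D - 1 <= lam) ->
  (* (B ; L) : l^2_{lam+1} -> l^2_lam is an invertible (bounded) operator *)
  (forall u, in_l2 (lam + 1)%:~R u -> in_l2 lam%:~R (BLop B a u)) ->
  (exists c : R, 0 < c /\ forall u, in_l2 (lam + 1)%:~R u ->
     l2norm lam%:~R (BLop B a u) <= c * l2norm (lam + 1)%:~R u /\
     l2norm (lam + 1)%:~R u <= c * l2norm lam%:~R (BLop B a u)) ->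
  (forall v, in_l2 lam%:~R v -> exists u, in_l2 (lam + 1)%:~R u /\ BLop B a u = v) ->
  exists (C : R) (n0 : nat), forall n : nat, (n0 <= n)%N ->
    (forall x : 'cV[R[i]]_n,
       vnorm lam%:~R (Amat B a n *m Rmat R N n *m x) <= C * vnorm lam%:~R x) /\
    (Amat B a n *m Rmat R N n \in unitmx) /\
    (forall x : 'cV[R[i]]_n,
       vnorm lam%:~R (invmx (Amat B a n *m Rmat R N n) *m x) <= C * vnorm lam%:~R x).
Proof.
move=> hN HM HB _ _ Hl2 [c [c0 Hc]] _.
have em : ((lam + 1)%:~R : R) = lam%:~R + 1 by rewrite intrD.
rewrite em in Hl2 Hc.
exact: (main_sec hN HM HB c0 Hl2 Hc).
Qed.
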